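(* Let $\rho>0$ and $y\in\mathbb{R}^n$. There exists a neighborhood $\mathcal Y$ of $y$ such that for all $u\in\mathcal Y$: \[ \mathcal K_{\mathcal D}(P_yu-\rho w)\subseteq\mathcal K_{\mathcal D}(P_yy-\rho w),\quad \mathcal Q_{\mathcal D}(P_yu-\rho w)\subseteq\mathcal Q_{\mathcal D}(P_yy-\rho w),\quad \mathcal Q_{S_\rho}(u)\subseteq\mathcal Q_{S_\rho}(y), \] and \[ \Pi_{\mathcal D}(P_yu-\rho w)=\Pi_{\mathcal D}(P_yy-\rho w)+\widehat Q P_y(u-y)\ \ \forall \widehat Q\in\mathcal Q_{\mathcal D}(P_yu-\rho w), \qquad S_\rho(u)=S_\rho(y)+Q(u-y)\ \ \forall Q\in\mathcal Q_{S_\rho}(u). \]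
   Context: $w\in\mathbb{R}^n$, $w_k=n-2k+1$. $\mathcal D:=\{x\in\mathbb{R}^n: x_1\ge\cdots\ge x_n\}$, $\Pi_{\mathcal D}$ the Euclidean projection onto $\mathcal D$. $B\in\mathbb{R}^{(n-1)\times n}$ with $Bx=(x_1-x_2,\dots,x_{n-1}-x_n)^T$; $B_i$ its $i$-th row and $B_K$ the rows indexed by $K$. $S_\rho(y):=\operatorname{argmin}_x\{\tfrac12\|x-y\|^2+\rho\sum_{i<j}|x_i-x_j|\}$. For each $y\in\mathbb{R}^n$, $P_y$ is a fixed permutation matrix such that $P_yy$ has non-increasing components. For $v\in\mathbb{R}^n$: $\mathcal M_{\mathcal D}(v)$ is the set of $\lambda\in\mathbb{R}^{n-1}$ with $\Pi_{\mathcal D}(v)-v+B^T\lambda=0$, $B\Pi_{\mathcal D}(v)\ge0$, $\lambda\le0$, $\lambda^TB\Pi_{\mathcal D}(v)=0$; $\mathcal I_{\mathcal D}(v):=\{i\in\{1,\dots,n-1\}: B_i\Pi_{\mathcal D}(v)=0\}$; $\mathcal K_{\mathcal D}(v):=\{K\subseteq\{1,\dots,n-1\}: \exists\lambda\in\mathcal M_{\mathcal D}(v)\text{ with }\mathrm{supp}(\lambda)\subseteq K\subseteq\mathcal I_{\mathcal D}(v),\ B_K\text{ has full row rank}\}$; $\mathcal Q_{\mathcal D}(v):=\{I_n-B_K^T(B_KB_K^T)^{-1}B_K: K\in\mathcal K_{\mathcal D}(v)\}$. Finally $\mathcal Q_{S_\rho}(y):=\{P_y^T\widehat QP_y:\widehat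 Q\in\mathcal Q_{\mathcal D}(P_yy-\rho w)\}$. *)

(* Defs.v *)
From HB Require Import structures.
From mathcomp Require Import all_boot all_order all_algebra all_fingroup.
Set Implicit Arguments. Unset Strict Implicit. Unset Printing Implicit Defensive.
Import Order.TTheory GRing.Theory Num.Theory.
Local Open Scope ring_scope.

Section Defs.
Variables (R : realFieldType) (n : nat).

(* w_k = n - 2k + 1 for k = 1..n; with 0-based index i = k-1: n - 2i - 1 *)
Definition wvec : 'cV[R]_n := \col_(i < n) (n%:R - 2 * (i : nat)%:R - 1).

Definition Bmat : 'M[R]_(n.-1, n) :=
  \matrix_(i < n.-1, j < n) (((j : nat) == i)%:R - ((j : nat) == i.+1)%:R).

Definition inD (x : 'cV[R]_n) : Prop :=
  forall i j : 'I_n, (i <= j)%N -> x j 0 <= x i 0.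

Definition sqnorm (x : 'cV[R]_n) : R := \sum_(i < n) x i 0 ^+ 2.

Definition is_projD (proj : 'cV[R]_n -> 'cV[R]_n) : Prop :=
  forall v, inD (proj v) /\
    forall z, inD z -> sqnorm (proj v - v) <= sqnorm (z - v).

Definition Sobj (rho : R) (y x : 'cV[R]_n) : R :=
  2^-1 * sqnorm (x - y) +
  rho * \sum_(i < n) \sum_(j < n | (i < j)%N) `|x i 0 - x j 0|.

Definition is_Srho (rho : R) (S : 'cV[R]_n -> 'cV[R]_n) : Prop :=
  forall y x, Sobj rho y (S y) <= Sobj rho y x.

Definition is_sorting_perm (P : 'cV[R]_n -> 'M[R]_n) : Prop :=
  forall y, is_perm_mx (P y) /\ inD (P y *m y).

Variable proj : 'cV[R]_n -> 'cV[R]_n.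

Definition MD (v : 'cV[R]_n) (lam : 'cV[R]_(n.-1)) : Prop :=
  proj v - v + Bmat^T *m lam = 0 /\
  (forall i, 0 <= (Bmat *m proj v) i 0) /\
  (forall i, lam i 0 <= 0) /\
  lam^T *m (Bmat *m proj v) = 0.

Definition ID (v : 'cV[R]_n) : {set 'I_(n.-1)} :=
  [set i | (Bmat *m proj v) i 0 == 0].

Definition BK (K : {set 'I_(n.-1)}) : 'M[R]_(#|K|, n) :=
  \matrix_(k < #|K|) row (enum_val k) Bmat.

Definition supp (lam : 'cV[R]_(n.-1)) : {set 'I_(n.-1)} :=
  [set i | lam i 0 != 0].

Definition KD (v : 'cV[R]_n) (K : {set 'I_(n.-1)}) : Prop :=
  (exists lam, MD v lam /\ supp lam \subset K) /\
  K \subset ID v /\ row_free (BK K).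

Definition QK (K : {set 'I_(n.-1)}) : 'M[R]_n :=
  1%:M - (BK K)^T *m invmx (BK K *m (BK K)^T) *m BK K.

Definition QD (v : 'cV[R]_n) (Q : 'M[R]_n) : Prop :=
  exists K, KD v K /\ Q = QK K.

Definition QS (P : 'cV[R]_n -> 'M[R]_n) (rho : R) (y : 'cV[R]_n) (Q : 'M[R]_n)
  : Prop :=
  exists Qh, QD (P y *m y - rho *: wvec) Qh /\ Q = (P y)^T *m Qh *m P y.

End Defs.

(* Main.v *)
Require Import Defs.
From HB Require Import structures.
From mathcomp Require Import all_boot all_order all_algebra all_fingroup.
Import Order.TTheory GRing.Theory Num.Theory.
Local Open Scope ring_scope.

From mathcomp Require Import ring lra zify.
Set Implicit Arguments. Unset Strict Implicit. Unset Printing Implicit Defensive.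

Section Dot.
Variables (R : realFieldType) (n : nat).
Local Notation V := 'cV[R]_n.

Definition dot (x y : V) : R := \sum_i x i 0 * y i 0.

Lemma sqnormE (x : V) : sqnorm x = dot x x.
Proof. by apply: eq_bigr => i _; rewrite expr2. Qed.

Lemma dotC (x y : V) : dot x y = dot y x.
Proof. by apply: eq_bigr => i _; rewrite mulrC. Qed.

Lemma dotDl (x y z : V) : dot (x + y) z = dot x z + dot y z.
Proof. by rewrite /dot -big_split; apply: eq_bigr => i _; rewrite mxE mulrDl. Qed.

Lemma dotNl (x z : V) : dot (- x) z = - dot x z.
Proof. by rewrite /dot -sumrN; apply: eq_bigr => i _; rewrite mxE mulNr. Qed.

Lemma dotBl (x y z : V) : dot (x - y) z = dot x z - dot y z.
Proof. by rewrite dotDl dotNl. Qed.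

Lemma dotZl (a : R) (x z : V) : dot (a *: x) z = a * dot x z.
Proof. by rewrite /dot mulr_sumr; apply: eq_bigr => i _; rewrite mxE mulrA. Qed.

Lemma dotDr (x y z : V) : dot z (x + y) = dot z x + dot z y.
Proof. by rewrite !(dotC z) dotDl. Qed.
Lemma dotBr (x y z : V) : dot z (x - y) = dot z x - dot z y.
Proof. by rewrite !(dotC z) dotBl. Qed.
Lemma dotNr (x z : V) : dot z (- x) = - dot z x.
Proof. by rewrite !(dotC z) dotNl. Qed.
Lemma dotZr (a : R) (x z : V) : dot z (a *: x) = a * dot z x.
Proof. by rewrite !(dotC z) dotZl. Qed.

Lemma dot_ge0 (x : V) : 0 <= dot x x.
Proof. by apply: sumr_ge0 => i _; rewrite -expr2 sqr_ge0. Qed.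

Lemma dot_eq0 (x : V) : dot x x = 0 -> x = 0.
Proof.
move=> h; apply/matrixP => i j; rewrite (ord1 j) mxE.
have h2 : x i 0 ^+ 2 = 0.
  move: h; rewrite -sqnormE /sqnorm => h.
  by apply: (psumr_eq0P _ h) => // k _; rewrite sqr_ge0.
by move/eqP: h2; rewrite sqrf_eq0 => /eqP.
Qed.

Lemma entry_sq_le (x : V) i : x i 0 ^+ 2 <= dot x x.
Proof.
rewrite -sqnormE /sqnorm (bigD1 i) //= lerDl.
by apply: sumr_ge0 => k _; rewrite sqr_ge0.
Qed.

End Dot.

Section Proj.
Variables (R : realFieldType) (n : nat).
Local Notation V := 'cV[R]_n.

Lemma inD_comb (x z : V) t : inD x -> inD z -> 0 <= t -> t <= 1 ->
  inD (x + t *: (z - x)).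
Proof.
move=> hx hz t0 t1 i j hij; rewrite !mxE.
have := hx i j hij; have := hz i j hij; nra.
Qed.

Lemma dot_expand (a d : V) t :
  dot (a + t *: d) (a + t *: d) = dot a a + 2 * t * dot a d + t ^+ 2 * dot d d.
Proof.
rewrite !dotDl !dotDr !dotZl !dotZr (dotC d a); ring.
Qed.

Lemma quad_lemma (a b : R) : 0 <= b ->
  (forall t, 0 < t -> t <= 1 -> 0 <= 2 * t * a + t ^+ 2 * b) -> 0 <= a.
Proof.
move=> b0 h; rewrite leNgt; apply/negP => a0.
have s0 : 0 < b - a by lra.
pose t := - a / (b - a).
have ht : t * (b - a) = - a by rewrite /t mulfVK // gt_eqF.
have t0 : 0 < t by rewrite /t divr_gt0 // oppr_gt0.
have t1 : t <= 1 by rewrite /t ler_pdivrMr // mul1r; lra.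
have := h t t0 t1; nra.
Qed.

Variable proj : V -> V.
Hypothesis Hproj : is_projD proj.

Lemma proj_inD v : inD (proj v).
Proof. by case: (Hproj v). Qed.

Lemma VI v z : inD z -> dot (v - proj v) (z - proj v) <= 0.
Proof.
move=> hz; set x := proj v; set d := z - x.
have : 0 <= dot (x - v) d.
  apply: (quad_lemma (dot_ge0 d)) => t t0 t1.
  have hin := inD_comb (proj_inD v) hz (ltW t0) t1.
  have := (Hproj v).2 _ hin.
  rewrite !sqnormE.
  have -> : x + t *: (z - x) - v = (x - v) + t *: d by rewrite /d addrAC.
  rewrite dot_expand; lra.
have -> : v - x = - (x - v) by rewrite opprB.
rewrite dotNl; lra.
Qed.

Lemma nonexp_aux (d e f : V) : dot (e - d + f) (- d) <= 0 -> dot f d <= 0 ->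
  dot d d <= dot e e.
Proof.
move=> h1 h2; have h3 := dot_ge0 (e - d).
rewrite dotNr !dotDl ?dotNl in h1.
rewrite !dotBl !dotBr (dotC d e) in h3.
lra.
Qed.

Lemma proj_nonexp a b : dot (proj a - proj b) (proj a - proj b) <= dot (a - b) (a - b).
Proof.
have h1 := VI a (proj_inD b).
have h2 := VI b (proj_inD a).
apply: (@nonexp_aux (proj a - proj b) (a - b) (b - proj b) _ h2).
have E1 : proj b - proj a = - (proj a - proj b) by apply/matrixP => i j; rewrite !mxE; ring.
have E2 : a - proj a = (a - b) - (proj a - proj b) + (b - proj b).
  by apply/matrixP => i j; rewrite !mxE; ring.
by move: h1; rewrite E1 E2.
Qed.

End Proj.

Section Bm.
Variables (R : realFieldType) (n : nat).
Local Notation V := 'cV[R]_n.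
Local Notation W := 'cV[R]_(n.-1).
Local Notation B := (Bmat R n).

Lemma ilo_proof (i : 'I_(n.-1)) : (i < n)%N.
Proof. have := ltn_ord i; lia. Qed.
Lemma ihi_proof (i : 'I_(n.-1)) : (i.+1 < n)%N.
Proof. have := ltn_ord i; lia. Qed.
Definition ilo (i : 'I_(n.-1)) : 'I_n := Ordinal (ilo_proof i).
Definition ihi (i : 'I_(n.-1)) : 'I_n := Ordinal (ihi_proof i).

Lemma sum_delta (x : V) (k : 'I_n) :
  \sum_(j < n) ((j : nat) == k)%:R * x j 0 = x k 0.
Proof.
rewrite (bigD1 k) //= eqxx mul1r big1 ?addr0 // => j /negbTE.
by rewrite val_eqE => ->; rewrite mul0r.
Qed.

Lemma BE (x : V) (i : 'I_(n.-1)) : (B *m x) i 0 = x (ilo i) 0 - x (ihi i) 0.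
Proof.
rewrite mxE.
rewrite (eq_bigr (fun j : 'I_n => ((j : nat) == ilo i)%:R * x j 0 - ((j : nat) == ihi i)%:R * x j 0)).
  by rewrite sumrB !sum_delta.
by move=> j _; rewrite mxE mulrBl.
Qed.

Definition Lf (l : W) (k : nat) : R := \sum_(i < n.-1 | (i : nat) == k) l i 0.
Definition Lpf (l : W) (k : nat) : R := if k is k'.+1 then Lf l k' else 0.

Lemma Lf_val (l : W) (i : 'I_(n.-1)) : Lf l i = l i 0.
Proof.
rewrite /Lf (bigD1 i) //= big1 ?addr0 // => j /andP [/eqP h /negP]; case.
by apply/eqP/val_inj.
Qed.

Lemma Lf_out (l : W) k : (n.-1 <= k)%N -> Lf l k = 0.
Proof.
move=> hk; rewrite /Lf big1 // => j /eqP hj.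
by have := ltn_ord j; rewrite hj; lia.
Qed.

Lemma BTE (l : W) (j : 'I_n) : (B^T *m l) j 0 = Lf l j - Lpf l j.
Proof.
rewrite mxE.
rewrite (eq_bigr (fun i : 'I_(n.-1) => ((j : nat) == i)%:R * l i 0 - ((j : nat) == i.+1)%:R * l i 0)); last first.
  by move=> i _; rewrite !mxE mulrBl.
rewrite sumrB; congr (_ - _).
  rewrite /Lf [RHS]big_mkcond /=; apply: eq_bigr => i _.
  by rewrite eq_sym; case: (_ == _); rewrite ?mul1r ?mul0r.
rewrite /Lpf; case: (nat_of_ord j) => [|j'].
  by rewrite big1 // => i _; rewrite mul0r.
rewrite /Lf [RHS]big_mkcond /=; apply: eq_bigr => i _.
by rewrite eqSS eq_sym; case: (_ == _); rewrite ?mul1r ?mul0r.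
Qed.

Lemma tele (l : W) k : \sum_(j < k.+1) (Lf l j - Lpf l j) = Lf l k.
Proof.
elim: k => [|k IH]; first by rewrite big_ord1 /= subr0.
by rewrite big_ord_recr /= IH addrC subrK.
Qed.

Lemma pref_conv (F : nat -> R) (k : nat) : (k < n)%N ->
  \sum_(j < n | (j <= k)%N) F j = \sum_(j < k.+1) F j.
Proof.
move=> hk; rewrite (big_ord_widen n F) //.
Qed.

Lemma BT_pref (l : W) (k : nat) : (k < n)%N ->
  \sum_(j < n | (j <= k)%N) (B^T *m l) j 0 = Lf l k.
Proof.
move=> hk; rewrite (eq_bigr (fun j : 'I_n => Lf l j - Lpf l j)); last by move=> j _; rewrite BTE.
by rewrite (pref_conv (fun j => Lf l j - Lpf l j)) // tele.
Qed.

Lemma prefS (x : V) (j : 'I_n) :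
  \sum_(i < n | (i <= j)%N) x i 0 = \sum_(i < n | (i < j)%N) x i 0 + x j 0.
Proof.
rewrite (bigD1 j) //= addrC; congr (_ + _); apply: eq_bigl => i.
by rewrite ltn_neqAle val_eqE andbC.
Qed.

Lemma pref_det (a b : V) :
  (forall k, (k < n)%N -> \sum_(j < n | (j <= k)%N) a j 0 = \sum_(j < n | (j <= k)%N) b j 0)
  -> a = b.
Proof.
move=> h; apply/matrixP => j c; rewrite (ord1 c).
have E (x : V) : x j 0 = \sum_(i < n | (i <= j)%N) x i 0 - \sum_(i < n | (i < j)%N) x i 0.
  by rewrite prefS addrC addKr.
rewrite (E a) (E b) h //; congr (_ - _).
case hj: (nat_of_ord j) => [|j'].
  by rewrite !big_pred0 // => i; rewrite ?hj ltn0.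
have hj' : (j' < n)%N by have := ltn_ord j; lia.
rewrite (eq_bigl (fun i : 'I_n => (i <= j')%N)); last by move=> i; rewrite ?hj ltnS.
rewrite [RHS](eq_bigl (fun i : 'I_n => (i <= j')%N)); last by move=> i; rewrite ?hj ltnS.
exact: h.
Qed.

End Bm.

Section Lam.
Variables (R : realFieldType) (n : nat).
Local Notation V := 'cV[R]_n.
Local Notation W := 'cV[R]_(n.-1).
Local Notation B := (Bmat R n).
Variable proj : V -> V.
Hypothesis Hproj : is_projD proj.

Definition ind (k : nat) : V := \col_j ((j <= k)%N)%:R.

Lemma dot_ind (x : V) k : dot x (ind k) = \sum_(j < n | (j <= k)%N) x j 0.
Proof.
rewrite /dot [RHS]big_mkcond; apply: eq_bigr => j _; rewrite mxE.
by case: (_ <= _)%N; rewrite ?mulr1 ?mulr0.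
Qed.

Lemma inD_add_ind (x : V) k c : inD x -> 0 <= c -> inD (x + c *: ind k).
Proof.
move=> hx c0 i j hij; rewrite !mxE.
have := hx i j hij.
case: (leqP j k) => hj.
  by rewrite (leq_trans hij hj) /=; lra.
case: (i <= k)%N => /=; lra.
Qed.

Lemma inD_add_const (x : V) c : inD x -> inD (x + c *: ind n).
Proof.
move=> hx i j hij; rewrite !mxE.
have := hx i j hij.
by rewrite (ltnW (ltn_ord i)) (ltnW (ltn_ord j)) /=; lra.
Qed.

Definition lamv (v : V) : W := \col_i \sum_(j < n | (j <= i)%N) (v j 0 - proj v j 0).

Lemma VI_ind (v : V) (d : V) : inD (proj v + d) -> dot (v - proj v) d <= 0.
Proof.
move=> h; have := VI Hproj v h.
by have -> : proj v + d - proj v = d by apply/matrixP => i j; rewrite !mxE; ring.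
Qed.

Lemma total_zero (v : V) : \sum_(j < n) (v j 0 - proj v j 0) = 0.
Proof.
have E (c : R) : dot (v - proj v) (c *: ind n) = c * \sum_(j < n) (v j 0 - proj v j 0).
  rewrite dotZr dot_ind; congr (_ * _); rewrite big_mkcond; apply: eq_bigr => j _.
  by rewrite (ltnW (ltn_ord j)) !mxE.
have h1 := VI_ind (inD_add_const 1 (proj_inD Hproj v)).
have h2 := VI_ind (inD_add_const (-1) (proj_inD Hproj v)).
rewrite E in h1; rewrite E in h2; lra.
Qed.

Lemma lamv_le0 (v : V) (i : 'I_(n.-1)) : lamv v i 0 <= 0.
Proof.
have h := VI_ind (inD_add_ind i (proj_inD Hproj v) ler01).
rewrite scale1r dot_ind in h.
by rewrite mxE; move: h; congr (_ <= _); apply: eq_bigr => j _; rewrite !mxE.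
Qed.

Lemma Bproj_ge0 (v : V) (i : 'I_(n.-1)) : 0 <= (B *m proj v) i 0.
Proof.
rewrite BE subr_ge0; apply: (proj_inD Hproj v) => /=; lia.
Qed.

Lemma lamv_compl (v : V) (i : 'I_(n.-1)) : (B *m proj v) i 0 != 0 -> lamv v i 0 = 0.
Proof.
move=> hne.
have dpos : 0 < (B *m proj v) i 0 by rewrite lt_def hne Bproj_ge0.
set x := proj v in hne dpos *; set del := (B *m x) i 0 in hne dpos *.
have hx : inD x := proj_inD Hproj v.
have hz : inD (x + (- del) *: ind i).
  move=> a b hab; rewrite !mxE.
  have := hx a b hab.
  case: (leqP b i) => hb.
    by rewrite (leq_trans hab hb) /=; lra.
  case: (leqP a i) => ha /=; last by lra.
  have h1 : x (ihi i) 0 >= x b 0 by apply: hx => /=.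
  have h2 : x a 0 >= x (ilo i) 0 by apply: hx => /=.
  have : del = x (ilo i) 0 - x (ihi i) 0 by rewrite /del BE.
  lra.
have h := VI_ind hz.
rewrite dotZr dot_ind in h.
have E : lamv v i 0 = \sum_(j < n | (j <= i)%N) (v - proj v) j 0.
  by rewrite mxE; apply: eq_bigr => j _; rewrite !mxE.
have := lamv_le0 v i; rewrite E => hl.
nra.
Qed.

Lemma lamv_eq (v : V) : proj v - v + B^T *m lamv v = 0.
Proof.
suff -> : B^T *m lamv v = v - proj v by apply/matrixP => i j; rewrite !mxE; ring.
apply: pref_det => k hk; rewrite BT_pref //.
case: (ltnP k n.-1) => hk2.
  have -> : k = nat_of_ord (Ordinal hk2) by [].
  by rewrite Lf_val mxE; apply: eq_bigr => j _; rewrite !mxE.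
rewrite Lf_out //; symmetry.
transitivity (\sum_(j < n) (v j 0 - proj v j 0)); last exact: total_zero v.
rewrite big_mkcond /=; apply: eq_bigr => j _.
have -> : (j <= k)%N by have := ltn_ord j; lia.
by rewrite !mxE.
Qed.

Lemma MD_lamv (v : V) : MD proj v (lamv v).
Proof.
split; first exact: lamv_eq.
split; first by move=> i; exact: Bproj_ge0.
split; first by move=> i; exact: lamv_le0.
apply/matrixP => a b; rewrite (ord1 a) (ord1 b) !mxE big1 // => i _.
rewrite mxE; case: (eqVneq ((B *m proj v) i 0) 0) => [->|h]; first by rewrite mulr0.
by rewrite lamv_compl // mul0r.
Qed.

Lemma MD_unique (v : V) (l : W) : MD proj v l -> l = lamv v.
Proof.
move=> [h _].
have hB : B^T *m l = v - proj v.
  apply/matrixP => i j; move/matrixP: h => /(_ i j); rewrite !mxE; lra.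
apply/matrixP => i j; rewrite (ord1 j) -Lf_val -BT_pref; last exact: ilo_proof.
by rewrite hB mxE; apply: eq_bigr => k _; rewrite !mxE.
Qed.

End Lam.

Section QKsec.
Variables (R : realFieldType) (n : nat).
Local Notation V := 'cV[R]_n.
Local Notation W := 'cV[R]_(n.-1).
Local Notation B := (Bmat R n).

Lemma BKE (K : {set 'I_(n.-1)}) (x : V) k : (BK R K *m x) k 0 = (B *m x) (enum_val k) 0.
Proof. by rewrite !mxE; apply: eq_bigr => j _; rewrite !mxE. Qed.

Lemma BK0 (K : {set 'I_(n.-1)}) (x : V) :
  (forall i, i \in K -> (B *m x) i 0 = 0) -> BK R K *m x = 0.
Proof.
move=> h; apply/matrixP => k c; rewrite (ord1 c) BKE h ?mxE //.
exact: enum_valP.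
Qed.

Lemma BK0_inv (K : {set 'I_(n.-1)}) (x : V) i :
  BK R K *m x = 0 -> i \in K -> (B *m x) i 0 = 0.
Proof.
move=> h hi; move/matrixP: h => /(_ (enum_rank_in hi i) 0).
by rewrite BKE enum_rankK_in // => ->; rewrite mxE.
Qed.

Definition restr (K : {set 'I_(n.-1)}) (l : W) : 'cV[R]_#|K| :=
  \col_k l (enum_val k) 0.

Lemma BT_restr (K : {set 'I_(n.-1)}) (l : W) :
  supp l \subset K -> B^T *m l = (BK R K)^T *m restr K l.
Proof.
move=> hs; apply/matrixP => j c; rewrite (ord1 c) !mxE.
rewrite (bigID (fun i => i \in K)) /= [X in _ + X]big1 ?addr0; last first.
  move=> i hi; have : i \notin supp l by apply: contra hi; move/subsetP: hs; apply.
  by rewrite inE negbK => /eqP ->; rewrite mulr0.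
rewrite (big_enum_val (fun i => B^T j i * l i 0)) /=.
by apply: eq_bigr => k _; rewrite !mxE.
Qed.

Lemma rV_sq_eq0 m (r : 'rV[R]_m) : (r *m r^T) 0 0 = 0 -> r = 0.
Proof.
rewrite mxE => h; apply/matrixP => a j; rewrite (ord1 a) mxE.
have h2 : r 0 j ^+ 2 = 0.
  have h' : \sum_(k < m) r 0 k ^+ 2 = 0.
    transitivity (\sum_j r 0 j * r^T j 0); last exact: h.
    by apply: eq_bigr => k _; rewrite mxE expr2.
  by apply: (psumr_eq0P _ h') => // k _; rewrite sqr_ge0.
by move/eqP: h2; rewrite sqrf_eq0 => /eqP.
Qed.

Lemma gram_unit m (A : 'M[R]_(m, n)) : row_free A -> A *m A^T \in unitmx.
Proof.
move=> hA; rewrite -row_free_unit -kermx_eq0; apply/eqP/matrixP => i j.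
have hr : row i (kermx (A *m A^T)) *m (A *m A^T) = 0.
  by apply/sub_kermxP; exact: row_sub.
set r := row i (kermx (A *m A^T)) in hr.
have hrA : r *m A = 0.
  apply: rV_sq_eq0.
  have -> : (r *m A) *m (r *m A)^T = (r *m (A *m A^T)) *m r^T.
    by rewrite trmx_mul !mulmxA.
  by rewrite hr mul0mx mxE.
have : r = 0 by apply/eqP; rewrite -(mulmx_free_eq0 _ hA) hrA.
by move/matrixP => /(_ 0 j); rewrite mxE !mxE.
Qed.

Variable proj : V -> V.
Hypothesis Hproj : is_projD proj.

Lemma KD_facts (v : V) K : KD proj v K ->
  [/\ supp (lamv proj v) \subset K, BK R K *m proj v = 0 & row_free (BK R K)].
Proof.
move=> [[l [hl hs]] [hI hf]]; split => //.
  by rewrite -(MD_unique hl).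
apply: BK0 => i hi; move/subsetP: hI => /(_ i hi); rewrite inE => /eqP //.
Qed.

Lemma supp_sub (l l' : W) (K : {set 'I_(n.-1)}) :
  supp l \subset K -> supp l' \subset K -> supp (l - l') \subset K.
Proof.
move=> h h'; apply/subsetP => i; rewrite inE mxE => hi.
case: (eqVneq (l i 0) 0) => e.
  by move/subsetP: h'; apply; rewrite inE; move: hi; rewrite e add0r mxE oppr_eq0.
by move/subsetP: h; apply; rewrite inE.
Qed.

Lemma claim4 (v v' : V) K : KD proj v K -> KD proj v' K ->
  proj v - proj v' = QK R K *m (v - v').
Proof.
move=> /KD_facts [s1 b1 f] /KD_facts [s2 b2 _].
have hu := gram_unit f.
set A := BK R K in b1 b2 f hu *.
set l := lamv proj v; set l' := lamv proj v'.
have e1 := lamv_eq Hproj v; have e2 := lamv_eq Hproj v'.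
have hdiff : v - v' = (proj v - proj v') + A^T *m restr K (l - l').
  rewrite -BT_restr; last exact: supp_sub.
  rewrite mulmxBr.
  apply/matrixP => i j; move/matrixP: e1 => /(_ i j); move/matrixP: e2 => /(_ i j).
  rewrite !mxE; lra.
have hb : A *m (proj v - proj v') = 0 by rewrite mulmxBr b1 b2 subrr.
rewrite hdiff /QK -/A mulmxDr !mulmxBl !mul1mx.
rewrite -!mulmxA hb !mulmx0 subr0.
rewrite [A *m (A^T *m _)]mulmxA mulKmx // subrr addr0 //.
Qed.

End QKsec.

Lemma fin_min_seq (R : realFieldType) (I : eqType) (f : I -> R) (s : seq I) :
  exists2 m : R, 0 < m & forall i, i \in s -> f i != 0 -> m <= `|f i|.
Proof.
elim: s => [|a s [m m0 hm]]; first by exists 1 => //.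
case: (eqVneq (f a) 0) => ha.
  exists m => // i; rewrite inE => /orP [/eqP ->|]; first by rewrite ha eqxx.
  exact: hm.
exists (Order.min m `|f a|).
  by rewrite lt_min m0 normr_gt0.
move=> i; rewrite inE => /orP [/eqP ->|hi] hf; first by rewrite ge_min lexx orbT.
by rewrite ge_min hm.
Qed.

Lemma fin_min (R : realFieldType) (I : finType) (f : I -> R) :
  exists2 m : R, 0 < m & forall i, f i != 0 -> m <= `|f i|.
Proof.
have [m m0 hm] := fin_min_seq f (enum I).
by exists m => // i; apply: hm; rewrite mem_enum.
Qed.

Section Cont.
Variables (R : realFieldType) (n : nat).
Local Notation V := 'cV[R]_n.
Local Notation W := 'cV[R]_(n.-1).
Local Notation B := (Bmat R n).
Variable proj : V -> V.
Hypothesis Hproj : is_projD proj.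

Lemma sq_lt_norm (d c : R) : 0 < c -> d ^+ 2 < c ^+ 2 -> `|d| < c.
Proof. move=> c0 h; rewrite ltr_norml; apply/andP; split; nra. Qed.

Lemma dot_bound (x : V) c : 0 <= c -> (forall j, `|x j 0| < c) -> dot x x <= n%:R * c ^+ 2.
Proof.
move=> c0 h; rewrite -sqnormE /sqnorm.
have -> : n%:R * c ^+ 2 = \sum_(j < n) c ^+ 2 by rewrite sumr_const card_ord mulr_natl.
apply: ler_sum => j _; move: (h j); rewrite ltr_norml => /andP [a b]; nra.
Qed.

Lemma local_KD (vy : V) :
  exists2 c : R, 0 < c & forall v : V, (forall j, `|v j 0 - vy j 0| < c) ->
    forall K, KD proj v K -> KD proj vy K.
Proof.
have [m1 m10 hm1] := fin_min (fun i : 'I_(n.-1) => (B *m proj vy) i 0).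
have [m2 m20 hm2] := fin_min (fun i : 'I_(n.-1) => lamv proj vy i 0).
set m := Order.min m1 m2.
have m0 : 0 < m by rewrite lt_min m10 m20.
have mle1 : m <= m1 by rewrite ge_min lexx.
have mle2 : m <= m2 by rewrite ge_min lexx orbT.
set N : R := n%:R + 1.
have N0 : 0 < N by rewrite /N ltr_pwDr // ler0n.
have nN : n%:R < N by rewrite /N ltrDl.
set c0 := m / (4 * N).
have c00 : 0 < c0 by rewrite /c0 divr_gt0 // mulr_gt0.
have c0m : c0 * (4 * N) = m by rewrite /c0 mulfVK // gt_eqF // mulr_gt0.
set c := c0 / N.
have c0' : 0 < c by rewrite /c divr_gt0.
have cN : c * N = c0 by rewrite /c mulfVK // gt_eqF.
clearbody c c0.
exists c => // v hv K hK.
have hp : forall j, `|proj v j 0 - proj vy j 0| < c0.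
  move=> j; apply: sq_lt_norm => //.
  have h1 := entry_sq_le (proj v - proj vy) j.
  rewrite !mxE in h1.
  have h2 := proj_nonexp Hproj v vy.
  have h3 : dot (v - vy) (v - vy) <= n%:R * c ^+ 2.
    by apply: dot_bound; [exact: ltW | move=> k; rewrite !mxE; exact: hv].
  have h4 : n%:R * c ^+ 2 < c0 ^+ 2.
    rewrite -cN; have hN1 : 1 <= N by rewrite /N lerDr ler0n.
    have hc2 : 0 < c ^+ 2 by rewrite exprn_gt0.
    have a1 : n%:R * c ^+ 2 < N * c ^+ 2 by rewrite ltr_pM2r.
    have a2 : N * c ^+ 2 <= (c * N) ^+ 2.
      have h5 : 0 <= N * (N - 1) by nra.
      have h6 := mulr_ge0 (ltW hc2) h5.
      rewrite exprMn !expr2; rewrite !expr2 in h6; nra.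
    lra.
  lra.
have hc : c <= c0.
  rewrite -cN; have hN1 : 1 <= N by rewrite /N lerDr ler0n.
  nra.
have hl : forall i, `|lamv proj v i 0 - lamv proj vy i 0| < m.
  move=> i; rewrite !mxE -sumrB.
  apply: (le_lt_trans (ler_norm_sum _ _ _)).
  apply: (@le_lt_trans _ _ (\sum_(j < n | (j <= i)%N) (c + c0))).
    apply: ler_sum => j _.
    have -> : v j 0 - proj v j 0 - (vy j 0 - proj vy j 0) =
              (v j 0 - vy j 0) - (proj v j 0 - proj vy j 0) by ring.
    apply: (le_trans (ler_normB _ _)).
    by apply: lerD; apply: ltW.
  apply: (@le_lt_trans _ _ (\sum_(j < n) (c + c0))).
    rewrite [X in _ <= X](bigID (fun j : 'I_n => (j <= i)%N)) /= lerDl.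
    apply: sumr_ge0 => j _; apply: addr_ge0; exact: ltW.
  rewrite sumr_const card_ord -mulr_natl.
  have hn0 : 0 <= n%:R :> R by rewrite ler0n.
  nra.
have [[l [hl1 hl2]] [hI hf]] := hK.
have el := MD_unique hl1.
split; last split => //.
  exists (lamv proj vy); split; first exact: MD_lamv.
  apply/subsetP => i; rewrite inE => hi.
  move/subsetP: hl2; apply; rewrite inE el.
  apply/negP => /eqP h0.
  have := hm2 i hi; have := hl i; rewrite h0 sub0r normrN; lra.
apply/subsetP => i hiK; rewrite inE.
have : i \in ID proj v by move/subsetP: hI; apply.
rewrite inE => /eqP h0.
apply/negPn/negP => hne.
have := hm1 i hne.
have : `|(B *m proj vy) i 0| < m.
  have -> : (B *m proj vy) i 0 = (B *m proj vy) i 0 - (B *m proj v) i 0 by rewrite h0 subr0.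
  rewrite !BE.
  have a := hp (ilo i); have b := hp (ihi i).
  rewrite distrC in a; rewrite distrC in b.
  have -> : proj vy (ilo i) 0 - proj vy (ihi i) 0 - (proj v (ilo i) 0 - proj v (ihi i) 0) =
    (proj vy (ilo i) 0 - proj v (ilo i) 0) - (proj vy (ihi i) 0 - proj v (ihi i) 0) by ring.
  apply: (le_lt_trans (ler_normB _ _)).
  have : c0 * 4 <= m.
    rewrite -c0m; have hN1 : 1 <= N by rewrite /N lerDr ler0n.
    nra.
  lra.
lra.
Qed.

End Cont.

Lemma sum_ltn_r n i : (\sum_(j < n) (i < j)%N = n - i.+1)%N.
Proof. elim: n => [|n IH]; first by rewrite big_ord0. rewrite big_ord_recr /= IH; case: ltnP; lia. Qed.

Lemma sum_ltn_l n k : (\sum_(j < n) (j < k)%N = minn n k)%N.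
Proof. elim: n => [|n IH]; first by rewrite big_ord0 min0n. rewrite big_ord_recr /= IH; case: ltnP; lia. Qed.

Section Perm.
Variables (R : realFieldType) (n : nat).
Local Notation V := 'cV[R]_n.

Lemma pmxE (s : {perm 'I_n}) (x : V) i : (perm_mx s *m x) i 0 = x (s i) 0.
Proof. by rewrite -row_permE mxE. Qed.

Lemma permTK (s : {perm 'I_n}) (x : V) : (perm_mx s)^T *m (perm_mx s *m x) = x.
Proof. by rewrite mulmxA tr_perm_mx -perm_mxM mulVg perm_mx1 mul1mx. Qed.

Lemma permKT (s : {perm 'I_n}) (x : V) : perm_mx s *m ((perm_mx s)^T *m x) = x.
Proof. by rewrite mulmxA tr_perm_mx -perm_mxM mulgV perm_mx1 mul1mx. Qed.

Lemma dot_perm (s : {perm 'I_n}) (x y : V) : dot (perm_mx s *m x) (perm_mx s *m y) = dot x y.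
Proof.
rewrite /dot (reindex_inj (@perm_inj _ s^-1)) /=; apply: eq_bigr => i _.
by rewrite !pmxE permKV.
Qed.

Definition pen (x : V) : R := \sum_(i < n) \sum_(j < n | (i < j)%N) `|x i 0 - x j 0|.

Lemma SobjE rho (y x : V) : Sobj rho y x = 2^-1 * dot (x - y) (x - y) + rho * pen x.
Proof. by rewrite /Sobj sqnormE. Qed.

Lemma pen_full (x : V) : 2 * pen x = \sum_(i < n) \sum_(j < n) `|x i 0 - x j 0|.
Proof.
have E : forall i : 'I_n, \sum_(j < n) `|x i 0 - x j 0| =
   \sum_(j < n | (i < j)%N) `|x i 0 - x j 0| + \sum_(j < n | (j < i)%N) `|x i 0 - x j 0|.
  move=> i; rewrite (bigID (fun j : 'I_n => (i < j)%N)) /=; congr (_ + _).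
  rewrite (bigID (fun j : 'I_n => (j < i)%N)) /= [X in _ + X]big1 ?addr0.
    by apply: eq_bigl => j; apply/idP/idP => [/andP []//|h]; rewrite h andbT -leqNgt ltnW.
  move=> j /andP []; rewrite -!leqNgt => h1 h2.
  have -> : j = i by apply/val_inj/eqP; rewrite eqn_leq h1 h2.
  by rewrite subrr normr0.
rewrite (eq_bigr _ (fun i _ => E i)) big_split /= mulr2n mulrDl mul1r; congr (_ + _).
rewrite /pen big_mkcond [RHS]big_mkcond /=.
rewrite (eq_bigr (fun i : 'I_n => \sum_(j < n) if (i < j)%N then `|x i 0 - x j 0| else 0)); last first.
  by move=> i _; rewrite big_mkcond.
rewrite exchange_big /=; apply: eq_bigr => i _; rewrite [RHS]big_mkcond; apply: eq_bigr => j _.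
by case: ifP; rewrite // distrC.
Qed.

Lemma pen_perm (s : {perm 'I_n}) (x : V) : pen (perm_mx s *m x) = pen x.
Proof.
have h : 2 * pen (perm_mx s *m x) = 2 * pen x.
  rewrite !pen_full (reindex_inj (@perm_inj _ s^-1)) /=; apply: eq_bigr => i _.
  rewrite (reindex_inj (@perm_inj _ s^-1)) /=; apply: eq_bigr => j _.
  by rewrite !pmxE !permKV.
by apply: (mulfI _ h); rewrite pnatr_eq0.
Qed.

Lemma pen_sorted (z : V) : inD z -> pen z = dot (wvec R n) z.
Proof.
move=> hz.
have E1 : pen z = \sum_(i < n) \sum_(j < n) (if (i < j)%N then z i 0 - z j 0 else 0).
  apply: eq_bigr => i _; rewrite big_mkcond; apply: eq_bigr => j _.
  case: ltnP => h //; rewrite ger0_norm // subr_ge0; apply: hz; exact: ltnW.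
have E2 : forall i j : 'I_n, (if (i < j)%N then z i 0 - z j 0 else 0) =
   z i 0 * ((i < j)%N)%:R - z j 0 * ((i < j)%N)%:R.
  by move=> i j; case: ltnP => _; rewrite ?mulr1 ?mulr0 ?subr0.
rewrite E1 (eq_bigr _ (fun i _ => eq_bigr _ (fun j _ => E2 i j))).
have A : \sum_(i < n) \sum_(j < n) z i 0 * ((i < j)%N)%:R = \sum_(i < n) z i 0 * ((n - i.+1)%N)%:R.
  by apply: eq_bigr => i _; rewrite -mulr_sumr -natr_sum sum_ltn_r.
have Bq : \sum_(i < n) \sum_(j < n) z j 0 * ((i < j)%N)%:R = \sum_(j < n) z j 0 * (j : nat)%:R.
  rewrite exchange_big /=; apply: eq_bigr => j _; rewrite -mulr_sumr -natr_sum sum_ltn_l.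
  by rewrite (minn_idPr (ltnW (ltn_ord j))).
rewrite (eq_bigr (fun i : 'I_n => \sum_(j < n) z i 0 * ((i < j)%N)%:R - \sum_(j < n) z j 0 * ((i < j)%N)%:R)); last by move=> i _; rewrite sumrB.
rewrite sumrB A Bq -sumrB /dot; apply: eq_bigr => i _; rewrite mxE.
have hi := ltn_ord i.
rewrite natrB //; ring.
Qed.

Lemma pen_mid (a b : V) : pen (2^-1 *: (a + b)) <= 2^-1 * pen a + 2^-1 * pen b.
Proof.
rewrite /pen !mulr_sumr -big_split; apply: ler_sum => i _.
rewrite !mulr_sumr -big_split; apply: ler_sum => j _.
rewrite !mxE.
have -> : 2^-1 * (a i 0 + b i 0) - 2^-1 * (a j 0 + b j 0) =
  2^-1 * (a i 0 - a j 0) + 2^-1 * (b i 0 - b j 0) by ring.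
apply: (le_trans (ler_normD _ _)).
by rewrite !normrM ger0_norm // invr_ge0 ler0n.
Qed.

Lemma Sobj_mid rho (y a b : V) : 0 <= rho ->
  Sobj rho y (2^-1 *: (a + b)) <=
  2^-1 * Sobj rho y a + 2^-1 * Sobj rho y b - 8^-1 * dot (a - b) (a - b).
Proof.
move=> r0; rewrite !SobjE.
set p := a - y; set q := b - y.
have e1 : 2^-1 *: (a + b) - y = 2^-1 *: p + 2^-1 *: q.
  by apply/matrixP => i j; rewrite /p /q !mxE; field.
have e2 : a - b = p - q by apply/matrixP => i j; rewrite /p /q !mxE; ring.
have E0 : dot (2^-1 *: (a + b) - y) (2^-1 *: (a + b) - y) = dot (2^-1 *: p + 2^-1 *: q) (2^-1 *: p + 2^-1 *: q).
  by rewrite e1.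
have E2 : dot (a - b) (a - b) = dot (p - q) (p - q) by congr (dot _ _).
have E3 : dot (a - y) (a - y) = dot p p by [].
have E4 : dot (b - y) (b - y) = dot q q by [].
rewrite E0 E2; clearbody p q.
have hp := pen_mid a b.
have hp' : rho * pen (2^-1 *: (a + b)) <= rho * (2^-1 * pen a + 2^-1 * pen b).
  by apply: ler_wpM2l.
rewrite !dotDl !dotDr ?dotNl ?dotNr ?dotBl ?dotBr !dotZl !dotZr ?dotNl ?dotNr (dotC q p).
set pp := dot p p; set pq := dot p q; set qq := dot q q.
have h2 : (2^-1 : R) * 2 = 1 by rewrite mulVf // pnatr_eq0.
have h8 : (8^-1 : R) * 8 = 1 by rewrite mulVf // pnatr_eq0.
have h4 : (2^-1 : R) * 2^-1 = 4^-1.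
  by rewrite -invfM; congr (_^-1); rewrite -natrM.
lra.
Qed.

End Perm.

Section Schar.
Variables (R : realFieldType) (n : nat).
Local Notation V := 'cV[R]_n.
Variables (rho : R) (S : V -> V).
Hypothesis HS : is_Srho rho S.
Hypothesis hr : 0 < rho.

Lemma unique_min (y x : V) : Sobj rho y x <= Sobj rho y (S y) -> x = S y.
Proof.
move=> h.
have h1 := Sobj_mid y x (S y) (ltW hr).
have h2 := HS y (2^-1 *: (x + S y)).
have h3 := dot_ge0 (x - S y).
have h8 : (0 : R) < 8^-1 by rewrite invr_gt0 ltr0n.
have h4 : dot (x - S y) (x - S y) = 0.
  apply/eqP; rewrite eq_le h3 andbT.
  have : 8^-1 * dot (x - S y) (x - S y) <= 0 by lra.
  by rewrite pmulr_rle0.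
have := dot_eq0 h4.
by move/eqP; rewrite subr_eq0 => /eqP.
Qed.

Lemma swap_dot (a b : 'I_n) (m y : V) : a != b ->
  dot (perm_mx (tperm a b) *m m) y = dot m y + (m b 0 - m a 0) * (y a 0 - y b 0).
Proof.
move=> hab.
have E : dot (perm_mx (tperm a b) *m m) y - dot m y = (m b 0 - m a 0) * (y a 0 - y b 0).
  rewrite /dot -sumrB (bigD1 a) //= (bigD1 b) /=; last by rewrite eq_sym.
  rewrite big1 ?addr0.
    by rewrite !pmxE tpermL tpermR; ring.
  move=> k /andP [hka hkb]; rewrite pmxE tpermD 1?eq_sym //; ring.
by rewrite -E addrC subrK.
Qed.

Lemma S_sorted (y : V) (s : {perm 'I_n}) :
  inD (perm_mx s *m y) -> inD (perm_mx s *m S y).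
Proof.
move=> hy i j hij; rewrite !pmxE.
have hyij := hy i j hij; rewrite !pmxE in hyij.
set a := s i in hyij *; set b := s j in hyij *.
rewrite leNgt; apply/negP => hlt.
have hab : a != b by apply/eqP => e; move: hlt; rewrite e ltxx.
set m := S y in hlt *.
pose m' := perm_mx (tperm a b) *m m.
have hle : Sobj rho y m' <= Sobj rho y m.
  rewrite !SobjE /m' pen_perm lerD2r ler_pM2l ?invr_gt0 ?ltr0n //.
  rewrite !dotBl !dotBr dot_perm (dotC y (perm_mx _ *m m)) swap_dot // (dotC y m).
  have : 0 <= (m b 0 - m a 0) * (y a 0 - y b 0) by apply: mulr_ge0; lra.
  lra.
have e := unique_min hle.
move/matrixP: e => /(_ a 0); rewrite /m' pmxE tpermL -/m => e.
by move: hlt; rewrite e ltxx.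
Qed.

Variable proj : V -> V.
Hypothesis Hproj : is_projD proj.

Lemma Sobj_sorted (y x0 : V) (s : {perm 'I_n}) : inD x0 ->
  Sobj rho y ((perm_mx s)^T *m x0) =
  2^-1 * dot (x0 - perm_mx s *m y) (x0 - perm_mx s *m y) + rho * dot (wvec R n) x0.
Proof.
move=> hx; rewrite SobjE; congr (_ * _ + _ * _).
  rewrite -(dot_perm s) mulmxBr permKT //.
by rewrite tr_perm_mx pen_perm pen_sorted.
Qed.

Theorem S_char (y : V) (s : {perm 'I_n}) : inD (perm_mx s *m y) ->
  S y = (perm_mx s)^T *m proj (perm_mx s *m y - rho *: wvec R n).
Proof.
move=> hy; symmetry; apply: unique_min.
set M := perm_mx s; set v := M *m y - rho *: wvec R n.
have hx0 := S_sorted hy.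
have -> : S y = M^T *m (M *m S y) by rewrite permTK.
rewrite !Sobj_sorted //; last exact: proj_inD.
have hp := (Hproj v).2 _ hx0.
rewrite !sqnormE in hp.
have F (x : V) : x - v = (x - M *m y) + rho *: wvec R n.
  by apply/matrixP => i j; rewrite /v !mxE; ring.
rewrite !F in hp.
rewrite /M in hp *.
move: hp; set Z := proj v; set X := perm_mx s *m S y; set Y := perm_mx s *m y; set w := wvec R n.
clearbody Z X Y w => hp.
rewrite !dotDl !dotDr !dotZl !dotZr ?dotNl ?dotNr in hp.
rewrite ?dotBl ?dotBr ?dotNl ?dotNr.
rewrite !(dotC Y X) !(dotC Y Z) !(dotC w X) !(dotC w Z) !(dotC w Y) in hp *.
lra.
Qed.

End Schar.

Section Sort.
Variables (R : realFieldType) (n : nat).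
Local Notation V := 'cV[R]_n.
Local Notation B := (Bmat R n).

Definition cnt (x : V) (c : R) : nat := (\sum_(b < n) nat_of_bool (c < x b 0)%R)%N.

Lemma cnt_perm (s : {perm 'I_n}) (x : V) c : cnt (perm_mx s *m x) c = cnt x c.
Proof.
rewrite /cnt (reindex_inj (@perm_inj _ s^-1)) /=; apply: eq_bigr => i _.
by rewrite pmxE permKV.
Qed.

Lemma sorted_le (z z' : V) (s : {perm 'I_n}) :
  inD z -> inD z' -> z' = perm_mx s *m z -> forall a, z' a 0 <= z a 0.
Proof.
move=> hz hz' e a; rewrite leNgt; apply/negP => hlt.
have h1 : (cnt z (z a 0%R) <= a)%N.
  rewrite /cnt -[X in (_ <= X)%N](minn_idPr (ltnW (ltn_ord a))) -sum_ltn_l.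
  apply: leq_sum => b _; case: ltP => //= hb.
  case: (ltnP b a) => // hab; have := hz a b hab; lra.
have h2 : (a.+1 <= cnt z' (z a 0%R))%N.
  rewrite /cnt -[X in (X <= _)%N](minn_idPr (ltn_ord a)) -sum_ltn_l.
  apply: leq_sum => b _; case: (ltnP b a.+1) => //= hb.
  have := hz' b a hb => h.
  by have -> : z a 0 < z' b 0 by lra.
move: h2; rewrite e cnt_perm; lia.
Qed.

Lemma sorted_perm_eq (z : V) (s : {perm 'I_n}) :
  inD z -> inD (perm_mx s *m z) -> perm_mx s *m z = z.
Proof.
move=> hz hz'; apply/matrixP => a j; rewrite (ord1 j); apply/eqP; rewrite eq_le.
rewrite (sorted_le hz hz' (erefl _)) /=.
apply: (sorted_le hz' hz (s := s^-1)).
by rewrite mulmxA -perm_mxM mulVg perm_mx1 mul1mx.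
Qed.

Lemma sort_unique (y : V) (s1 s2 : {perm 'I_n}) :
  inD (perm_mx s1 *m y) -> inD (perm_mx s2 *m y) -> perm_mx s2 *m y = perm_mx s1 *m y.
Proof.
move=> h1 h2.
have e : perm_mx s2 *m y = perm_mx (s2 * s1^-1) *m (perm_mx s1 *m y).
  by rewrite mulmxA -perm_mxM -mulgA mulVg mulg1.
rewrite e sorted_perm_eq //; by rewrite -e.
Qed.

End Sort.

Section Tie.
Variables (R : realFieldType) (n : nat).
Local Notation V := 'cV[R]_n.
Local Notation B := (Bmat R n).
Variable proj : V -> V.
Hypothesis Hproj : is_projD proj.
Variables (rho : R) (z0 : V).
Hypothesis hr : 0 < rho.
Hypothesis hz0 : inD z0.
Let vy := z0 - rho *: wvec R n.

Lemma Lf_le0 (v : V) k : Lf (lamv proj v) k <= 0.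
Proof. by apply: sumr_le0 => i _; exact: lamv_le0. Qed.

Lemma tie_lam (i : 'I_(n.-1)) : z0 (ilo i) 0 = z0 (ihi i) 0 -> lamv proj vy i 0 != 0.
Proof.
move=> he; apply/negP => /eqP h0.
have e := lamv_eq Hproj vy.
have hB : B^T *m lamv proj vy = vy - proj vy.
  apply/matrixP => p q; move/matrixP: e => /(_ p q); rewrite !mxE; lra.
have E (j : 'I_n) : vy j 0 - proj vy j 0 = Lf (lamv proj vy) j - Lpf (lamv proj vy) j.
  by rewrite -BTE hB !mxE.
have hlo := E (ilo i); have hhi := E (ihi i).
rewrite /= Lf_val h0 in hlo; rewrite /= Lf_val h0 in hhi.
have a1 : 0 <= vy (ilo i) 0 - proj vy (ilo i) 0.
  rewrite hlo /Lpf; case: (nat_of_ord i) => [|k]; first by rewrite subr0.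
  by rewrite sub0r oppr_ge0 Lf_le0.
have a2 : vy (ihi i) 0 - proj vy (ihi i) 0 <= 0.
  by rewrite hhi subr0 Lf_le0.
have a3 : proj vy (ihi i) 0 <= proj vy (ilo i) 0.
  by apply: (proj_inD Hproj vy) => /=.
have a4 : vy (ihi i) 0 - vy (ilo i) 0 = 2 * rho.
  rewrite /vy !mxE he /=.
  have -> : ((i.+1 : nat)%:R : R) = (i : nat)%:R + 1 by rewrite -addn1 natrD.
  ring.
have b1 : vy (ihi i) 0 <= proj vy (ihi i) 0 by lra.
have b2 : proj vy (ilo i) 0 <= vy (ilo i) 0 by lra.
have b3 : vy (ihi i) 0 <= vy (ilo i) 0 by lra.
have b4 : 0 < 2 * rho by rewrite mulr_gt0.
rewrite -a4 in b4; lra.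
Qed.

Lemma tie_eq (K : {set 'I_(n.-1)}) (x : V) : KD proj vy K -> BK R K *m x = 0 ->
  forall a b : 'I_n, z0 a 0 = z0 b 0 -> x a 0 = x b 0.
Proof.
move=> hK hx.
have [hs _ _] := KD_facts hK.
suff H : forall d (a b : 'I_n), (b : nat) = (a + d)%N -> z0 a 0 = z0 b 0 -> x a 0 = x b 0.
  move=> a b hab; case: (leqP a b) => h.
    by apply: (H (b - a)%N) => //; lia.
  by symmetry; apply: (H (a - b)%N); [lia | symmetry].
elim => [|d IH] a b hb hab.
  by have -> : a = b by apply: val_inj; rewrite /= hb addn0.
have ha : (a < n.-1)%N by have := ltn_ord b; lia.
have ha1 : (a.+1 < n)%N by have := ltn_ord b; lia.
pose i : 'I_(n.-1) := Ordinal ha.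
pose a' : 'I_n := Ordinal ha1.
have el : ilo i = a by apply: val_inj.
have eh : ihi i = a' by apply: val_inj.
have z1 : z0 a' 0 <= z0 a 0 by apply: hz0 => /=.
have z2 : z0 b 0 <= z0 a' 0 by apply: hz0 => /=; lia.
have t : z0 (ilo i) 0 = z0 (ihi i) 0 by rewrite el eh; lra.
have hiK : i \in K by move/subsetP: hs; apply; rewrite inE; exact: tie_lam.
have := BK0_inv hx hiK; rewrite BE el eh => hxa.
have := IH a' b; rewrite /= => h; have := h ltac:(lia) ltac:(lra); lra.
Qed.

Lemma perm_fix (K : {set 'I_(n.-1)}) (s : {perm 'I_n}) (x : V) : KD proj vy K -> BK R K *m x = 0 ->
  perm_mx s *m z0 = z0 -> perm_mx s *m x = x.
Proof.
move=> hK hx hs; apply/matrixP => a j; rewrite (ord1 j) pmxE.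
apply: (tie_eq hK hx).
by move/matrixP: hs => /(_ a 0); rewrite pmxE.
Qed.

Lemma QK_sym (K : {set 'I_(n.-1)}) : row_free (BK R K) -> (QK R K)^T = QK R K.
Proof.
move=> hf; rewrite /QK linearB /= trmx1 !trmx_mul trmxK trmx_inv trmx_mul trmxK.
by rewrite mulmxA.
Qed.

Lemma BK_QK (K : {set 'I_(n.-1)}) : row_free (BK R K) -> BK R K *m QK R K = 0.
Proof.
move=> hf; have hu := gram_unit hf.
rewrite /QK mulmxBr mulmx1 !mulmxA mulmxV // mul1mx subrr //.
Qed.

Lemma QK_comm (K : {set 'I_(n.-1)}) (s : {perm 'I_n}) : KD proj vy K -> perm_mx s *m z0 = z0 ->
  (perm_mx s)^T *m QK R K *m perm_mx s = QK R K.
Proof.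
move=> hK hs.
have [_ _ hf] := KD_facts hK.
set Q := QK R K.
have hBQ : BK R K *m Q = 0 := BK_QK hf.
have fixQ (t : {perm 'I_n}) : perm_mx t *m z0 = z0 -> perm_mx t *m Q = Q.
  move=> ht; apply/matrixP => a j.
  have hc : BK R K *m col j Q = 0.
    by rewrite colE mulmxA hBQ mul0mx.
  have := perm_fix hK hc ht; move/matrixP => /(_ a 0).
  have e : perm_mx t *m col j Q = col j (perm_mx t *m Q) by rewrite !colE mulmxA.
  by rewrite e !mxE.
have h2 : perm_mx s^-1 *m Q = Q.
  apply: fixQ; by rewrite -{1}hs mulmxA -perm_mxM mulVg perm_mx1 mul1mx.
rewrite tr_perm_mx h2.
apply: trmx_inj; rewrite trmx_mul QK_sym // tr_perm_mx h2 //.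
Qed.


End Tie.

Unset Implicit Arguments. Set Strict Implicit. Set Printing Implicit Defensive.

Lemma entry_v (R : realFieldType) (n : nat) (t : {perm 'I_n}) (x : 'cV[R]_n) (rho : R) j :
  (perm_mx t *m x - rho *: wvec R n) j 0 = x (t j) 0 - rho * wvec R n j 0.
Proof. by rewrite -row_permE !mxE. Qed.

Lemma subsub (M : zmodType) (a b c : M) : (a - c) - (b - c) = a - b.
Proof. by rewrite opprB addrA subrK. Qed.

Theorem proposition2p8 (R : realFieldType) (n : nat)
  (proj : 'cV[R]_n -> 'cV[R]_n) (S : 'cV[R]_n -> 'cV[R]_n)
  (P : 'cV[R]_n -> 'M[R]_n) (rho : R) (y : 'cV[R]_n) :
  is_projD proj -> is_Srho rho S -> is_sorting_perm P -> 0 < rho ->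
  exists2 e : R, 0 < e &
    forall u : 'cV[R]_n, (forall i, `|u i 0 - y i 0| < e) ->
      let vu := P y *m u - rho *: wvec R n in
      let vy := P y *m y - rho *: wvec R n in
      [/\ forall K, KD proj vu K -> KD proj vy K,
          forall Q, QD proj vu Q -> QD proj vy Q,
          forall Q, QS proj P rho u Q -> QS proj P rho y Q,
          forall Qh, QD proj vu Qh ->
            proj vu = proj vy + Qh *m P y *m (u - y)
        & forall Q, QS proj P rho u Q -> S u = S y + Q *m (u - y)].
Proof.
move=> Hproj HS HP hr.
have [hPy hDy] := HP y.
case/is_perm_mxP: hPy => sy ePy.
rewrite ePy in hDy.
pose vY := perm_mx sy *m y - rho *: wvec R n.
have [c c0 hc] := local_KD Hproj vY.
have [my my0 hmy] := fin_min (fun ab : 'I_n * 'I_n => y ab.1 0 - y ab.2 0).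
have my20 : 0 < my / 2 by rewrite divr_gt0.
exists (Order.min c (my / 2)); first by rewrite lt_min c0 my20.
move=> u hu vu vy.
have hu1 i : `|u i 0 - y i 0| < c by have := hu i; rewrite lt_min => /andP [].
have hu2 i : `|u i 0 - y i 0| < my / 2 by have := hu i; rewrite lt_min => /andP [].
have close (t : {perm 'I_n}) : forall j,
    `|(perm_mx t *m u - rho *: wvec R n) j 0 - (perm_mx t *m y - rho *: wvec R n) j 0| < c.
  by move=> j; rewrite !entry_v; have := hu1 (t j); congr (_ < _); congr `|_|; ring.
have evy : vy = vY by rewrite /vy ePy.
have evu : vu = perm_mx sy *m u - rho *: wvec R n by rewrite /vu ePy.
have C1 : forall K, KD proj vu K -> KD proj vy K.
  move=> K hK; rewrite evy; apply: (hc (perm_mx sy *m u - rho *: wvec R n)); first exact: close.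
  by rewrite -evu.
have [hPu hDu] := HP u.
case/is_perm_mxP: hPu => su ePu.
have hDu' := hDu; rewrite ePu in hDu'.
have hsort : inD (perm_mx su *m y).
  move=> i j hij; rewrite !pmxE.
  have := hDu' i j hij; rewrite !pmxE => hu_ij.
  rewrite leNgt; apply/negP => hlt.
  have hne : y (su j) 0 - y (su i) 0 != 0 by rewrite subr_eq0 gt_eqF.
  have := hmy (su j, su i) hne; rewrite /= gtr0_norm ?subr_gt0 // => hg.
  have := hu2 (su i); have := hu2 (su j); rewrite !ltr_norml => /andP [a1 a2] /andP [b1 b2].
  lra.
have heq : perm_mx su *m y = perm_mx sy *m y := sort_unique hDy hsort.
pose vU := perm_mx su *m u - rho *: wvec R n.
have evY : vY = perm_mx su *m y - rho *: wvec R n by rewrite /vY heq.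
have hKu : forall K, KD proj vU K -> KD proj vY K.
  move=> K hK; apply: (hc vU) => //; rewrite evY; exact: close.
have hKu' : forall K, KD proj vU K -> KD proj (perm_mx su *m y - rho *: wvec R n) K.
  by move=> K hK; rewrite -evY; exact: hKu.
split.
- exact: C1.
- by move=> Q [K [hK ->]]; exists K; split => //; apply: C1.
- move=> Q [Qh [[K [hK ->]] ->]].
  rewrite ePu in hK; have hKy := hKu K hK.
  exists (QK R K); split.
    by exists K; split => //; rewrite ePy.
  rewrite ePu ePy.
  have et : perm_mx su = perm_mx (su * sy^-1)%g *m perm_mx sy :> 'M[R]_n.
    by rewrite -perm_mxM -mulgA mulVg mulg1.
  have hz : perm_mx (su * sy^-1)%g *m (perm_mx sy *m y) = perm_mx sy *m y.
    by rewrite mulmxA -et heq.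
  have hcomm := QK_comm Hproj hr hDy hKy hz.
  rewrite et trmx_mul.
  have -> : (perm_mx sy)^T *m (perm_mx (su * sy^-1)%g)^T *m QK R K *m
      (perm_mx (su * sy^-1)%g *m perm_mx sy) =
      (perm_mx sy)^T *m ((perm_mx (su * sy^-1)%g)^T *m QK R K *m perm_mx (su * sy^-1)%g) *m perm_mx sy.
    by rewrite !mulmxA.
  by rewrite hcomm.
- move=> Qh [K [hK ->]].
  have e4 := claim4 Hproj hK (C1 K hK).
  have ed : vu - vy = P y *m (u - y) by rewrite /vu /vy mulmxBr subsub.
  by rewrite -mulmxA -ed -e4 addrC subrK.
- move=> Q [Qh [[K [hK ->]] ->]].
  rewrite ePu in hK *.
  have e4 := claim4 Hproj hK (hKu' K hK).
  rewrite (S_char HS hr Hproj hDu') (S_char HS hr Hproj hsort).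
  have ed : vU - (perm_mx su *m y - rho *: wvec R n) = perm_mx su *m (u - y).
    by rewrite /vU mulmxBr subsub.
  rewrite -/vU.
  apply/eqP; rewrite -subr_eq0; apply/eqP.
  rewrite opprD addrA -mulmxBr e4 ed !mulmxA subrr //.
Qed.
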